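(* Let $F$ be a hyperfield whose additive hypergroup is superiorly canonical. Then there exists a Krasner valuation $v$ on $F$ whose norm satisfies $\mathrm{ig}(\rho_v)=\{0\}$, and any two Krasner valuations on $F$ with this property are equivalent.
   Context: A canonical hypergroup is a triple $(H,+,0)$ where $H\neq\emptyset$, $+$ assigns to each pair a subset $x+y\subseteq H$ (for sets $A+B:=\bigcup_{a\in A,b\in B}a+b$), $0\in H$, such that $+$ is associative and commutative, each $x$ has a unique $-x$ with $0\in x+(-x)$, and $z\in x+y\Rightarrow y\in z+(-x)$; write $x-y:=x+(-y)$. A hyperfield is $(F,+,\cdot,0,1)$ with $(F,+,0)$ a canonical hypergroup, $(F,\cdot)$ commutative with $0$ absorbing, $x(y+z)=xy+xz$, and $F\setminus\{0\}$ an abelian group with neutral $1\neq 0$. A canonical hypergroup $H$ is superiorly canonical if: (SCH1) $x\in x+y$ implies $x+y=\{x\}$; (SCH2) $(x+y)\cap(z+t)\neq\emptyset$ implies $x+y\subseteq z+t$ or $z+t\subseteq x+y$; (SCH3) for $x\neq y$ and $z,t\in x-y$, $z-z=t-t$; (SCH4) if $x\in z-z$ and $y\notin z-z$ then $x-x\subseteq y-y$. Valuation on $F$: for an ordered abelian group $\Gamma$ and $\infty>\Gamma$ with $\gamma+\infty=\infty+\gamma=\infty$, a surjective map $v:F\to\Gamma\cup\{\infty\}$ with $vx=\infty\iff x=0$, $v(xy)=vx+vy$, $z\in x+y\Rightarrow vz\ge\min\{vx,vy\}$; $vF:=v(F\setminus\{0\})$. Valuations $v_i:F\to\Gamma_i\cup\{\infty\}$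 are equivalent if $v_2=\sigma\circ v_1$ for an order-preserving group isomorphism $\sigma:\Gamma_1\to\Gamma_2$ ($\sigma(\infty)=\infty$). An initial segment of $\Gamma$ is $\rho\subseteq\Gamma$ with $\delta\in\rho,\gamma<\delta\Rightarrow\gamma\in\rho$; $\rho+\gamma:=\{\delta+\gamma:\delta\in\rho\}$; ''$\alpha>\rho+\gamma$'' means $\alpha\notin\rho+\gamma$; $\mathrm{ig}(\rho):=\{\gamma\in\Gamma:\rho+\gamma=\rho\}$. Krasner valuation: a valuation $v$ on $F$ such that (KVH1) for all $x,y\in F$ with $0\notin x+y$, $v(x+y)$ is a singleton; (KVH2) there is an initial segment $\rho_v$ of $vF$ with $0\in\rho_v$ (the norm) such that for all $x,y,z,t\in F$ with $z\in x+y$: $t\in x+y$ iff $vs>\rho_v+\min\{vx,vy\}$ for all $s\in z-t$. *)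

(* Defs.v *)
Set Implicit Arguments.

Definition subset {T : Type} (A B : T -> Prop) := forall t, A t -> B t.
Definition set_eq {T : Type} (A B : T -> Prop) := forall t, A t <-> B t.

Record hyperfield := Hyperfield {
  hf_car :> Type;
  hadd : hf_car -> hf_car -> hf_car -> Prop;   (* hadd x y z  <->  z \in x + y *)
  hzero : hf_car;
  hneg : hf_car -> hf_car;
  hmul : hf_car -> hf_car -> hf_car;
  hone : hf_car;
  hadd_assoc : forall x y z w,
      (exists u, hadd x y u /\ hadd u z w) <-> (exists u, hadd y z u /\ hadd x u w);
  hadd_comm : forall x y z, hadd x y z <-> hadd y x z;
  hneg_spec : forall x, hadd x (hneg x) hzero;
  hneg_uniq : forall x y, hadd x y hzero -> y = hneg x;
  hadd_rev : forall x y z, hadd x y z -> hadd z (hneg x) y;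
  hmul_comm : forall x y, hmul x y = hmul y x;
  hmul_assoc : forall x y z, hmul x (hmul y z) = hmul (hmul x y) z;
  hmul_0l : forall x, hmul hzero x = hzero;
  hmul_1l : forall x, hmul hone x = x;
  hone_neq0 : hone <> hzero;
  hmul_neq0 : forall x y, x <> hzero -> y <> hzero -> hmul x y <> hzero;
  hmul_inv : forall x, x <> hzero -> exists y, y <> hzero /\ hmul x y = hone;
  (* distributivity x(y+z) = xy + xz as sets *)
  hmul_distr : forall x y z w,
      (exists u, hadd y z u /\ w = hmul x u) <-> hadd (hmul x y) (hmul x z) w
}.

Arguments hadd {h}.
Arguments hneg {h}.
Arguments hmul {h}.

Definition hsum {F : hyperfield} (x y : F) : F -> Prop := fun z => hadd x y z.
Definition hdiff {F : hyperfield} (x y : F) : F -> Prop := hsum x (hneg y).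

Definition superiorly_canonical (F : hyperfield) : Prop :=
  (* SCH1 *)
  (forall x y : F, hsum x y x -> set_eq (hsum x y) (fun w => w = x)) /\
  (* SCH2 *)
  (forall x y z t : F, (exists w, hsum x y w /\ hsum z t w) ->
       subset (hsum x y) (hsum z t) \/ subset (hsum z t) (hsum x y)) /\
  (* SCH3 *)
  (forall x y z t : F, x <> y -> hdiff x y z -> hdiff x y t ->
       set_eq (hdiff z z) (hdiff t t)) /\
  (* SCH4 *)
  (forall x y z : F, hdiff z z x -> ~ hdiff z z y -> subset (hdiff x x) (hdiff y y)).

Record OAG := MkOAG {
  og_car :> Type;
  og_add : og_car -> og_car -> og_car;
  og_zero : og_car;
  og_opp : og_car -> og_car;
  og_le : og_car -> og_car -> Prop;
  og_addA : forall a b c, og_add a (og_add b c) = og_add (og_add a b) c;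
  og_addC : forall a b, og_add a b = og_add b a;
  og_add0 : forall a, og_add og_zero a = a;
  og_addN : forall a, og_add (og_opp a) a = og_zero;
  og_le_refl : forall a, og_le a a;
  og_le_trans : forall a b c, og_le a b -> og_le b c -> og_le a c;
  og_le_antisym : forall a b, og_le a b -> og_le b a -> a = b;
  og_le_total : forall a b, og_le a b \/ og_le b a;
  og_le_add : forall a b c, og_le a b -> og_le (og_add a c) (og_add b c)
}.

Arguments og_add {o}.
Arguments og_opp {o}.
Arguments og_le {o}.

(* Gamma \cup {oo}, with None = oo *)
Definition ext_add {G : OAG} (a b : option G) : option G :=
  match a, b with Some a, Some b => Some (og_add a b) | _, _ => None end.

Definition ext_le {G : OAG} (a b : option G) : Prop :=
  match a, b with
  | _, None => True
  | None, Some _ => False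
  | Some a, Some b => og_le a b
  end.

Definition is_min {G : OAG} (m a b : option G) : Prop :=
  (ext_le a b /\ m = a) \/ (ext_le b a /\ m = b).

Definition valuation {F : hyperfield} {G : OAG} (v : F -> option G) : Prop :=
  (forall g : option G, exists x, v x = g) /\
  (forall x, v x = None <-> x = hzero F) /\
  (forall x y, v (hmul x y) = ext_add (v x) (v y)) /\
  (forall x y z, hsum x y z -> exists m, is_min m (v x) (v y) /\ ext_le m (v z)).

(* Initial segments of vF (= Gamma, since v is surjective) *)
Definition initial_segment {G : OAG} (rho : G -> Prop) : Prop :=
  forall d g : G, rho d -> og_le g d -> rho g.

(* alpha \in rho + gamma  <->  rho (alpha - gamma) *)
Definition in_translate {G : OAG} (rho : G -> Prop) (g a : G) : Prop :=
  rho (og_add a (og_opp g)).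

(* "a > rho + g", i.e. a \notin rho + g, for a, g in Gamma \cup {oo}.
   Convention for g = oo: rho + oo is taken to be all of Gamma, so
   a > rho + oo iff a = oo. *)
Definition above {G : OAG} (rho : G -> Prop) (g a : option G) : Prop :=
  match g, a with
  | Some g, Some a => ~ in_translate rho g a
  | Some _, None => True
  | None, a => a = None
  end.

Definition krasner_valuation {F : hyperfield} {G : OAG} (v : F -> option G)
    (rho : G -> Prop) : Prop :=
  valuation v /\
  (* KVH1 *)
  (forall x y : F, ~ hsum x y (hzero F) ->
     exists g, (exists z, hsum x y z /\ v z = g) /\ (forall z, hsum x y z -> v z = g)) /\
  (* KVH2 : rho is the norm *)
  initial_segment rho /\ rho (og_zero G) /\
  (forall x y z t : F, hsum x y z ->
     (hsum x y t <->
      forall s, hdiff z t s -> forall m, is_min m (v x) (v y) -> above rho m (v s))).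

Definition ig {G : OAG} (rho : G -> Prop) : G -> Prop :=
  fun g => forall a : G, in_translate rho g a <-> rho a.

Definition ig_trivial {G : OAG} (rho : G -> Prop) : Prop :=
  forall g : G, ig rho g <-> g = og_zero G.

Definition equivalent_valuations {F : hyperfield} {G1 G2 : OAG}
    (v1 : F -> option G1) (v2 : F -> option G2) : Prop :=
  exists sigma : G1 -> G2,
    (forall a b, sigma (og_add a b) = og_add (sigma a) (sigma b)) /\
    (forall a b, og_le a b <-> og_le (sigma a) (sigma b)) /\
    (forall b : G2, exists a, sigma a = b) /\
    (forall x, v2 x = option_map sigma (v1 x)).

(* Main.v *)
Require Import Defs.
From Stdlib Require Import Classical ClassicalEpsilon FunctionalExtensionality PropExtensionality ProofIrrelevance.

#[local] Arguments hadd_assoc {h} x y z w.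
#[local] Arguments hadd_comm {h} x y z.
#[local] Arguments hneg_spec {h} x.
#[local] Arguments hneg_uniq {h} x y.
#[local] Arguments hadd_rev {h} x y z.
#[local] Arguments hmul_comm {h} x y.
#[local] Arguments hmul_assoc {h} x y z.
#[local] Arguments hmul_0l {h} x.
#[local] Arguments hmul_1l {h} x.
#[local] Arguments hmul_neq0 {h} x y.
#[local] Arguments hmul_inv {h} x.
#[local] Arguments hmul_distr {h} x y z w.

Lemma hnn {F : hyperfield} (x : F) : hneg (hneg x) = x.
Proof. symmetry. apply hneg_uniq. apply hadd_comm. apply hneg_spec. Qed.

Lemma hmul_0r {F : hyperfield} (x : F) : hmul x (hzero F) = hzero F.
Proof. rewrite hmul_comm. apply hmul_0l. Qed.

Lemma hmul_1r {F : hyperfield} (x : F) : hmul x (hone F) = x.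
Proof. rewrite hmul_comm. apply hmul_1l. Qed.

Lemma hneg_mul {F : hyperfield} (x : F) : hneg x = hmul (hneg (hone F)) x.
Proof.
  assert (H : hadd (hmul x (hone F)) (hmul x (hneg (hone F))) (hmul x (hzero F))).
  { apply hmul_distr. exists (hzero F). split; auto. apply hneg_spec. }
  rewrite hmul_0r, hmul_1r in H. apply hneg_uniq in H. rewrite <- H. apply hmul_comm.
Qed.

Lemma hneg0 {F : hyperfield} : hneg (hzero F) = hzero F.
Proof. rewrite hneg_mul. apply hmul_0r. Qed.

Lemma mul_hadd {F : hyperfield} (u a b c : F) : hadd a b c -> hadd (hmul u a) (hmul u b) (hmul u c).
Proof. intro H. apply hmul_distr. exists c; auto. Qed.

Lemma neg_hadd {F : hyperfield} (a b c : F) : hadd a b c -> hadd (hneg a) (hneg b) (hneg c).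
Proof. intro H. rewrite (hneg_mul a), (hneg_mul b), (hneg_mul c). now apply mul_hadd. Qed.

Lemma add0_r {F : hyperfield} (x : F) : hadd x (hzero F) x.
Proof.
  apply hadd_comm. pose proof (hneg_spec (hneg x)) as H. rewrite hnn in H.
  apply hadd_rev in H. rewrite hnn in H. exact H.
Qed.

Lemma add0_eq {F : hyperfield} (x w : F) : hadd x (hzero F) w -> w = x.
Proof.
  intro H. apply hadd_rev in H. apply hneg_uniq in H.
  rewrite <- (hnn x), H, hnn. reflexivity.
Qed.

Lemma add0l_eq {F : hyperfield} (x w : F) : hadd (hzero F) x w -> w = x.
Proof. intro H. apply add0_eq. now apply hadd_comm. Qed.

Lemma hadd_ne {F : hyperfield} (x y : F) : exists w, hadd x y w.
Proof.
  destruct (proj2 (hadd_assoc x y (hneg y) x)) as [u [Hu _]].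
  - exists (hzero F). split. apply hneg_spec. apply add0_r.
  - now exists u.
Qed.

Lemma assoc_swap {F : hyperfield} (a b c w : F) :
  (exists u, hadd a b u /\ hadd u c w) -> exists u, hadd a c u /\ hadd u b w.
Proof.
  intro H. apply hadd_assoc in H. destruct H as [u [H1 H2]].
  apply hadd_assoc. exists u. split; auto. now apply hadd_comm.
Qed.

Definition B {F : hyperfield} (x : F) : F -> Prop := hdiff x x.

Lemma B_iff {F : hyperfield} (x d : F) : B x d <-> hadd x d x.
Proof.
  unfold B, hdiff, hsum. split; intro H.
  - apply hadd_comm in H. apply hadd_rev in H. rewrite hnn in H. now apply hadd_comm.
  - now apply hadd_rev in H.
Qed.

Lemma B0 {F : hyperfield} (x : F) : B x (hzero F).
Proof. apply hneg_spec. Qed.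

Lemma Bzero {F : hyperfield} (d : F) : B (hzero F) d <-> d = hzero F.
Proof.
  rewrite B_iff. split; intro H.
  - apply hadd_comm in H. symmetry. now apply add0_eq.
  - subst. apply add0_r.
Qed.

Lemma Bneg {F : hyperfield} (x d : F) : B x d -> B x (hneg d).
Proof.
  unfold B, hdiff, hsum. intro H. apply neg_hadd in H. rewrite hnn in H. now apply hadd_comm.
Qed.

Lemma Bnegx {F : hyperfield} (x d : F) : B (hneg x) d <-> B x d.
Proof. unfold B, hdiff, hsum. rewrite hnn. split; apply hadd_comm. Qed.

Lemma Bscale {F : hyperfield} (u x d : F) : B x d -> B (hmul u x) (hmul u d).
Proof. rewrite !B_iff. apply mul_hadd. Qed.

Lemma Bscale_iff {F : hyperfield} (u x d : F) : u <> hzero F -> (B (hmul u x) (hmul u d) <-> B x d).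
Proof.
  intro hu. split; [|apply Bscale]. intro H. destruct (hmul_inv u hu) as [u' [_ Hu]].
  apply (Bscale u') in H. rewrite !hmul_assoc, (hmul_comm u' u), Hu, !hmul_1l in H. exact H.
Qed.

Lemma SCH1' {F : hyperfield} (S : superiorly_canonical F) (x d w : F) : B x d -> hadd x d w -> w = x.
Proof.
  intros Hd Hw. apply B_iff in Hd. destruct S as [S1 _]. apply (S1 x d Hd w). exact Hw.
Qed.

Lemma not_Bxx {F : hyperfield} (S : superiorly_canonical F) (x : F) : x <> hzero F -> ~ B x x.
Proof.
  intros hx H. destruct S as [S1 _]. unfold B, hdiff in H.
  apply hx. symmetry. apply (S1 x (hneg x) H (hzero F)). apply hneg_spec.
Qed.

Definition sub {F : hyperfield} (A C : F -> Prop) := forall t, A t -> C t.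

Lemma Sing {F : hyperfield} (S : superiorly_canonical F) (x y z w : F) :
  hadd x y z -> sub (B y) (B x) -> hadd z (hneg y) w -> w = x.
Proof.
  intros H1 Hs H2.
  assert (E : exists u, hadd x y u /\ hadd u (hneg y) w) by (exists z; auto).
  apply hadd_assoc in E. destruct E as [u [Hu Hw]].
  apply (SCH1' S x u w); [apply Hs; exact Hu | exact Hw].
Qed.

Lemma Ultra {F : hyperfield} (S : superiorly_canonical F) (x y z : F) :
  hadd x y z -> sub (B y) (B x) -> sub (B z) (B x).
Proof.
  intros H Hs d Hd. apply B_iff. destruct (hadd_ne x d) as [w Hw].
  assert (Hx : hadd z (hneg y) x) by (apply hadd_rev; now apply hadd_comm).
  assert (E : exists u, hadd z (hneg y) u /\ hadd u d w) by (exists x; auto).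
  apply assoc_swap in E. destruct E as [u [Hu1 Hu2]].
  pose proof (SCH1' S z d u Hd Hu1). subst u.
  pose proof (Sing S x y z w H Hs Hu2). subst w. exact Hw.
Qed.

Lemma sum_to {F : hyperfield} (z t s : F) : hadd z (hneg t) s -> hadd s t z.
Proof. intro H. apply hadd_comm in H. apply hadd_rev in H. now rewrite hnn in H. Qed.

Lemma core_fwd {F : hyperfield} (S : superiorly_canonical F) (x y z t s : F) :
  hadd x y z -> hadd x y t -> hadd z (hneg t) s -> sub (B y) (B x) -> B x s.
Proof.
  intros Hz Ht Hs Hsub. apply sum_to in Hs.
  assert (E : exists u, hadd x y u /\ hadd s u z) by (exists t; auto).
  apply hadd_assoc in E. destruct E as [u [Hu1 Hu2]].
  assert (Hu3 : hadd z (hneg y) u) by (apply hadd_rev; now apply hadd_comm).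
  pose proof (Sing S x y z u Hz Hsub Hu3). subst u.
  apply B_iff. now apply hadd_comm.
Qed.

Lemma core_bwd {F : hyperfield} (S : superiorly_canonical F) (x y z t s : F) :
  hadd x y z -> hadd z (hneg t) s -> B x s -> hadd x y t.
Proof.
  intros Hz Hs Hb. apply sum_to in Hs. apply hadd_rev in Hs.
  assert (E : exists u, hadd x y u /\ hadd u (hneg s) t) by (exists z; auto).
  apply assoc_swap in E. destruct E as [u [Hu1 Hu2]].
  pose proof (SCH1' S x (hneg s) u (Bneg _ _ Hb) Hu1). subst u. exact Hu2.
Qed.

Lemma B_total {F : hyperfield} (S : superiorly_canonical F) (x y : F) :
  sub (B x) (B y) \/ sub (B y) (B x).
Proof.
  destruct S as [_ [S2 _]]. apply (S2 x (hneg x) y (hneg y)).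
  exists (hzero F). split; apply hneg_spec.
Qed.

Lemma SCH4' {F : hyperfield} (S : superiorly_canonical F) (z x y : F) :
  B z x -> ~ B z y -> sub (B x) (B y).
Proof. destruct S as [_ [_ [_ S4]]]. apply S4. Qed.

Lemma SCH3' {F : hyperfield} (S : superiorly_canonical F) (x y z t : F) :
  x <> y -> hdiff x y z -> hdiff x y t -> forall d, B z d <-> B t d.
Proof. destruct S as [_ [_ [S3 _]]]. apply S3. Qed.

Lemma Bmul {F : hyperfield} (x y y' d : F) : hmul y y' = hone F ->
  (B (hmul x y) d <-> B x (hmul y' d)).
Proof.
  intro Hy. assert (hy : y <> hzero F).
  { intro E. subst. rewrite hmul_0l in Hy. now apply (hone_neq0 F). }
  rewrite <- (Bscale_iff y x (hmul y' d) hy).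
  rewrite hmul_assoc, Hy, hmul_1l, hmul_comm. tauto.
Qed.

Lemma setext {F : hyperfield} (A C : F -> Prop) : (forall d, A d <-> C d) -> A = C.
Proof. intro H. apply functional_extensionality. intro d. apply propositional_extensionality. apply H. Qed.

Lemma WD {F : hyperfield} (x x' y : F) : y <> hzero F -> B x = B x' -> B (hmul x y) = B (hmul x' y).
Proof.
  intros hy E. destruct (hmul_inv y hy) as [y' [_ Hy]]. apply setext. intro d.
  rewrite (Bmul x y y' d Hy), (Bmul x' y y' d Hy), E. tauto.
Qed.

Lemma WD2 {F : hyperfield} (x x' y y' : F) : x' <> hzero F -> y <> hzero F ->
  B x = B x' -> B y = B y' -> B (hmul x y) = B (hmul x' y').
Proof.
  intros hx hy E1 E2. rewrite (WD x x' y hy E1), (hmul_comm x' y), (hmul_comm x' y').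
  apply WD; auto.
Qed.

Definition Gam (F : hyperfield) := {A : F -> Prop | exists x, x <> hzero F /\ A = B x}.
Definition mk {F : hyperfield} (x : F) (hx : x <> hzero F) : Gam F :=
  exist _ (B x) (ex_intro _ x (conj hx eq_refl)).
Definition rep {F : hyperfield} (g : Gam F) : F :=
  proj1_sig (constructive_indefinite_description _ (proj2_sig g)).
Lemma rep_spec {F : hyperfield} (g : Gam F) : rep g <> hzero F /\ proj1_sig g = B (rep g).
Proof. unfold rep. destruct constructive_indefinite_description as [x Hx]. exact Hx. Qed.
Definition rep_nz {F : hyperfield} (g : Gam F) := proj1 (rep_spec g).

Lemma Gam_eq {F : hyperfield} (g h : Gam F) : proj1_sig g = proj1_sig h -> g = h.
Proof.
  destruct g as [g pg], h as [h ph]; simpl. intro E. subst. f_equal. apply proof_irrelevance.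
Qed.

Lemma mk_eq {F : hyperfield} (x y : F) hx hy : B x = B y -> mk x hx = mk y hy.
Proof. intro E. apply Gam_eq. exact E. Qed.

Lemma mk_inj {F : hyperfield} (x y : F) hx hy : mk x hx = mk y hy -> B x = B y.
Proof. intro E. exact (f_equal (@proj1_sig _ _) E). Qed.

Lemma mk_rep {F : hyperfield} (g : Gam F) : g = mk (rep g) (rep_nz g).
Proof. apply Gam_eq. simpl. apply rep_spec. Qed.

Lemma B_rep_mk {F : hyperfield} (x : F) hx : B (rep (mk x hx)) = B x.
Proof. destruct (rep_spec (mk x hx)) as [_ E]. simpl in E. auto. Qed.

Lemma Gam_ind {F : hyperfield} (P : Gam F -> Prop) : (forall x hx, P (mk x hx)) -> forall g, P g.
Proof. intros H g. rewrite (mk_rep g). apply H. Qed.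

Definition ginv_sig {F : hyperfield} (g : Gam F) :=
  constructive_indefinite_description _ (hmul_inv (rep g) (rep_nz g)).
Definition ginv {F : hyperfield} (g : Gam F) : F := proj1_sig (ginv_sig g).
Lemma ginv_nz {F : hyperfield} (g : Gam F) : ginv g <> hzero F.
Proof. unfold ginv. destruct (ginv_sig g) as [y Hy]. apply Hy. Qed.
Lemma ginv_spec {F : hyperfield} (g : Gam F) : hmul (rep g) (ginv g) = hone F.
Proof. unfold ginv. destruct (ginv_sig g) as [y Hy]. apply Hy. Qed.

Definition gadd {F : hyperfield} (g h : Gam F) : Gam F :=
  mk (hmul (rep g) (rep h)) (hmul_neq0 _ _ (rep_nz g) (rep_nz h)).
Definition gzero (F : hyperfield) : Gam F := mk (hone F) (hone_neq0 F).
Definition gopp {F : hyperfield} (g : Gam F) : Gam F := mk (ginv g) (ginv_nz g).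
Definition gle {F : hyperfield} (g h : Gam F) : Prop := sub (proj1_sig h) (proj1_sig g).

Lemma add_mk {F : hyperfield} (x y : F) hx hy :
  gadd (mk x hx) (mk y hy) = mk (hmul x y) (hmul_neq0 x y hx hy).
Proof.
  apply mk_eq. apply WD2; [exact hx | apply rep_nz | apply B_rep_mk | apply B_rep_mk].
Qed.

Lemma opp_mk {F : hyperfield} (x y : F) hx hy : hmul x y = hone F -> gopp (mk x hx) = mk y hy.
Proof.
  intro Hxy. apply mk_eq. set (g := mk x hx).
  pose proof (ginv_spec g) as H1. pose proof (ginv_nz g) as hi. pose proof (rep_nz g) as hr.
  pose proof (B_rep_mk x hx) as Hr. fold g in Hr.
  assert (E1 : B (hmul (ginv g) x) = B (hone F)).
  { rewrite <- H1, (hmul_comm (rep g)). apply WD2; [exact hi | exact hx | reflexivity | symmetry; exact Hr]. }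
  assert (E2 : B (hmul (hmul (ginv g) x) y) = B (hmul (hone F) y)).
  { apply WD2; [apply hone_neq0 | exact hy | exact E1 | reflexivity]. }
  rewrite <- hmul_assoc, Hxy, hmul_1r, hmul_1l in E2. exact E2.
Qed.

Lemma gle_mk {F : hyperfield} (x y : F) hx hy : gle (mk x hx) (mk y hy) <-> sub (B y) (B x).
Proof. unfold gle. simpl. tauto. Qed.

Lemma gaddA {F : hyperfield} (a b c : Gam F) : gadd a (gadd b c) = gadd (gadd a b) c.
Proof.
  revert a b c. refine (Gam_ind _ _). intros x hx. refine (Gam_ind _ _). intros y hy.
  refine (Gam_ind _ _). intros z hz. rewrite !add_mk. apply mk_eq. now rewrite hmul_assoc.
Qed.

Lemma gaddC {F : hyperfield} (a b : Gam F) : gadd a b = gadd b a.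
Proof.
  revert a b. refine (Gam_ind _ _). intros x hx. refine (Gam_ind _ _). intros y hy.
  rewrite !add_mk. apply mk_eq. now rewrite hmul_comm.
Qed.

Lemma gadd0 {F : hyperfield} (a : Gam F) : gadd (gzero F) a = a.
Proof.
  revert a. refine (Gam_ind _ _). intros x hx. unfold gzero. rewrite !add_mk. apply mk_eq.
  now rewrite hmul_1l.
Qed.

Lemma gaddN {F : hyperfield} (a : Gam F) : gadd (gopp a) a = gzero F.
Proof.
  revert a. refine (Gam_ind _ _). intros x hx. destruct (hmul_inv x hx) as [y [hy Hxy]].
  rewrite (opp_mk x y hx hy Hxy). unfold gzero. rewrite !add_mk. apply mk_eq.
  now rewrite hmul_comm, Hxy.
Qed.

Lemma gle_refl {F : hyperfield} (a : Gam F) : gle a a.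
Proof. unfold gle, sub. auto. Qed.

Lemma gle_trans {F : hyperfield} (a b c : Gam F) : gle a b -> gle b c -> gle a c.
Proof. unfold gle, sub. auto. Qed.

Lemma gle_antisym {F : hyperfield} (a b : Gam F) : gle a b -> gle b a -> a = b.
Proof.
  unfold gle, sub. intros H1 H2. apply Gam_eq. apply functional_extensionality. intro d.
  apply propositional_extensionality. split; auto.
Qed.

Lemma gle_total {F : hyperfield} (S : superiorly_canonical F) (a b : Gam F) : gle a b \/ gle b a.
Proof.
  revert a b. refine (Gam_ind _ _). intros x hx. refine (Gam_ind _ _). intros y hy.
  rewrite !gle_mk. apply B_total; auto.
Qed.

Lemma gle_add {F : hyperfield} (a b c : Gam F) : gle a b -> gle (gadd a c) (gadd b c).
Proof.
  revert a b c. refine (Gam_ind _ _). intros x hx. refine (Gam_ind _ _). intros y hy.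
  refine (Gam_ind _ _). intros z hz. rewrite !add_mk, !gle_mk.
  destruct (hmul_inv z hz) as [z' [_ Hz]].
  intros H d. rewrite !(Bmul _ z z' d Hz). apply H.
Qed.

Definition GamOAG (F : hyperfield) (S : superiorly_canonical F) : OAG :=
  {| og_car := Gam F; og_add := gadd; og_zero := gzero F; og_opp := gopp; og_le := gle;
     og_addA := gaddA; og_addC := gaddC; og_add0 := gadd0; og_addN := gaddN;
     og_le_refl := gle_refl; og_le_trans := gle_trans; og_le_antisym := gle_antisym;
     og_le_total := gle_total S; og_le_add := gle_add |}.

Definition cv {F : hyperfield} (S : superiorly_canonical F) (x : F) : option (GamOAG F S) :=
  match excluded_middle_informative (x = hzero F) with
  | left _ => None
  | right h => Some (mk x h)
  end.

Lemma cv_0 {F : hyperfield} (S : superiorly_canonical F) : cv S (hzero F) = None.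
Proof. unfold cv. destruct excluded_middle_informative; [reflexivity | congruence]. Qed.

Lemma cv_nz {F : hyperfield} (S : superiorly_canonical F) (x : F) (hx : x <> hzero F) :
  cv S x = Some (mk x hx).
Proof. unfold cv. destruct excluded_middle_informative; [congruence|]. f_equal. now apply mk_eq. Qed.

Lemma cv_None {F : hyperfield} (S : superiorly_canonical F) (x : F) : cv S x = None <-> x = hzero F.
Proof.
  split; intro H.
  - destruct (classic (x = hzero F)) as [E|E]; auto. rewrite (cv_nz S x E) in H. discriminate.
  - subst. apply cv_0.
Qed.

Definition crho {F : hyperfield} (S : superiorly_canonical F) (g : GamOAG F S) : Prop :=
  ~ B (hone F) (rep g).

Lemma WD_rho {F : hyperfield} (x x' : F) : x <> hzero F -> x' <> hzero F -> B x = B x' ->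
  B (hone F) x -> B (hone F) x'.
Proof.
  intros hx hx' E H. destruct (hmul_inv x hx) as [y [hy Hy]].
  assert (Ew : B (hmul x' y) = B (hone F)).
  { rewrite <- Hy. apply WD2; auto. }
  apply (Bscale (hmul x' y)) in H. rewrite hmul_1r, Ew in H.
  rewrite <- hmul_assoc, (hmul_comm y x), Hy, hmul_1r in H. exact H.
Qed.

Lemma rho_mk {F : hyperfield} (S : superiorly_canonical F) (x : F) hx :
  crho S (mk x hx) <-> ~ B (hone F) x.
Proof.
  unfold crho. pose proof (B_rep_mk x hx) as E. pose proof (rep_nz (mk x hx)) as hr.
  split; intros H1 H2; apply H1.
  - apply (WD_rho x); auto.
  - apply (WD_rho (rep (mk x hx))); auto.
Qed.

Lemma ext_le_refl {G : OAG} (a : option G) : ext_le a a.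
Proof. destruct a; simpl; auto. apply og_le_refl. Qed.

Lemma ext_le_total {G : OAG} (a b : option G) : ext_le a b \/ ext_le b a.
Proof. destruct a, b; simpl; auto. apply og_le_total. Qed.

Lemma T1 {F : hyperfield} (S : superiorly_canonical F) (x y : F) :
  ext_le (cv S x) (cv S y) -> sub (B y) (B x).
Proof.
  intro H. destruct (classic (x = hzero F)) as [Ex|Ex].
  - subst. rewrite cv_0 in H. destruct (classic (y = hzero F)) as [Ey|Ey].
    + subst. intros d Hd; auto.
    + rewrite (cv_nz S y Ey) in H. simpl in H. contradiction.
  - destruct (classic (y = hzero F)) as [Ey|Ey].
    + subst. intros d Hd. apply Bzero in Hd. subst. apply B0.
    + rewrite (cv_nz S y Ey), (cv_nz S x Ex) in H. simpl in H. exact H.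
Qed.

Lemma T3 {F : hyperfield} (S : superiorly_canonical F) (x z : F) :
  x <> hzero F -> sub (B z) (B x) -> ext_le (cv S x) (cv S z).
Proof.
  intros hx H. rewrite (cv_nz S x hx). destruct (classic (z = hzero F)) as [Ez|Ez].
  - subst. rewrite cv_0. simpl. auto.
  - rewrite (cv_nz S z Ez). simpl. exact H.
Qed.

Lemma ultra_case {F : hyperfield} (S : superiorly_canonical F) (x y z : F) :
  hadd x y z -> ext_le (cv S x) (cv S y) -> ext_le (cv S x) (cv S z).
Proof.
  intros Hz H. destruct (classic (x = hzero F)) as [Ex|Ex].
  - subst. rewrite cv_0 in *. destruct (classic (y = hzero F)) as [Ey|Ey].
    + subst. apply add0l_eq in Hz. subst. rewrite cv_0. simpl. auto.
    + rewrite (cv_nz S y Ey) in H. simpl in H. contradiction.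
  - apply T3; auto. apply (Ultra S x y z Hz). apply (T1 S). exact H.
Qed.

Lemma cv_valuation {F : hyperfield} (S : superiorly_canonical F) : valuation (cv S).
Proof.
  split; [|split; [|split]].
  - intros [g|].
    + exists (rep g). rewrite (cv_nz S _ (rep_nz g)). f_equal. symmetry. apply mk_rep.
    + exists (hzero F). apply cv_0.
  - apply cv_None.
  - intros x y. destruct (classic (x = hzero F)) as [Ex|Ex].
    + subst. rewrite hmul_0l, cv_0. reflexivity.
    + destruct (classic (y = hzero F)) as [Ey|Ey].
      * subst. rewrite hmul_0r, cv_0. destruct (cv S x); reflexivity.
      * rewrite (cv_nz S x Ex), (cv_nz S y Ey), (cv_nz S _ (hmul_neq0 x y Ex Ey)). simpl.
        f_equal. symmetry. apply add_mk.
  - intros x y z Hz. destruct (ext_le_total (cv S x) (cv S y)) as [H|H].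
    + exists (cv S x). split. left; auto. eapply ultra_case; eauto.
    + exists (cv S y). split. right; auto. eapply ultra_case; eauto. apply hadd_comm. exact Hz.
Qed.

Lemma T2 {F : hyperfield} (S : superiorly_canonical F) (x s : F) :
  above (crho S) (cv S x) (cv S s) <-> B x s.
Proof.
  destruct (classic (x = hzero F)) as [Ex|Ex].
  - subst. rewrite cv_0, Bzero. simpl. apply cv_None.
  - rewrite (cv_nz S x Ex). destruct (classic (s = hzero F)) as [Es|Es].
    + subst. rewrite cv_0. simpl. split; auto. intros _. apply B0.
    + rewrite (cv_nz S s Es). simpl. unfold in_translate. simpl.
      destruct (hmul_inv x Ex) as [x' [hx' Hx]].
      rewrite (opp_mk x x' Ex hx' Hx), add_mk, rho_mk.
      rewrite <- (Bscale_iff x (hone F) _ Ex), hmul_1r, hmul_assoc, (hmul_comm x s),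
        <- hmul_assoc, Hx, hmul_1r.
      split; [apply NNPP | auto].
Qed.


Lemma min_B {F : hyperfield} (S : superiorly_canonical F) (x y s : F) m :
  is_min m (cv S x) (cv S y) -> (above (crho S) m (cv S s) <-> B x s \/ B y s).
Proof.
  intros [[H E]|[H E]]; subst m; rewrite T2.
  - pose proof (T1 S x y H). split; auto. intros [?|?]; auto.
  - pose proof (T1 S y x H). split; auto. intros [?|?]; auto.
Qed.

Lemma is_min_ex {G : OAG} (a b : option G) : exists m, is_min m a b.
Proof. destruct (ext_le_total a b); [exists a; left | exists b; right]; auto. Qed.

Lemma cv_krasner {F : hyperfield} (S : superiorly_canonical F) : krasner_valuation (cv S) (crho S).
Proof.
  split; [apply cv_valuation|]. split; [|split; [|split]].
  - intros x y H0. destruct (hadd_ne x y) as [z0 Hz0]. exists (cv S z0). split; [exists z0; auto|].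
    intros z Hz. assert (hxy : x <> hneg y).
    { intro E. subst. apply H0. apply hadd_comm. apply hneg_spec. }
    assert (hz : z <> hzero F) by (intro E; subst; auto).
    assert (hz0 : z0 <> hzero F) by (intro E; subst; auto).
    rewrite (cv_nz S z hz), (cv_nz S z0 hz0). f_equal. apply mk_eq. apply setext.
    apply (SCH3' S x (hneg y)); auto; unfold hdiff, hsum; rewrite hnn; auto.
  - intros d g Hd Hg. revert d g Hd Hg. refine (Gam_ind _ _). intros u hu.
    refine (Gam_ind _ _). intros a ha. rewrite !rho_mk. simpl. intros Hu Hsub Ha.
    apply Hu. apply (WD_rho a u); auto. apply setext. intro d. split; [apply (SCH4' S (hone F) a u); auto|].
    apply Hsub.
  - unfold og_zero. simpl. unfold gzero. rewrite rho_mk. apply not_Bxx; auto. apply hone_neq0.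
  - intros x y z t Hz. unfold hsum in *. split.
    + intros Ht s Hs m Hm. apply (min_B S x y s m Hm).
      destruct (B_total S x y) as [H|H].
      * right. apply (core_fwd S y x z t s); auto; apply hadd_comm; auto.
      * left. apply (core_fwd S x y z t s); auto.
    + intro H. destruct (hadd_ne z (hneg t)) as [s Hs]. destruct (is_min_ex (cv S x) (cv S y)) as [m Hm].
      specialize (H s Hs m Hm). apply (min_B S x y s m Hm) in H. destruct H as [H|H].
      * apply (core_bwd S x y z t s); auto.
      * apply hadd_comm. apply (core_bwd S y x z t s); auto. apply hadd_comm; auto.
Qed.

Lemma cv_ig {F : hyperfield} (S : superiorly_canonical F) : ig_trivial (crho S).
Proof.
  intro g. split.
  - revert g. refine (Gam_ind _ _). intros w hw H. unfold og_zero; simpl. unfold gzero.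
    apply mk_eq. apply setext. intro e. destruct (classic (e = hzero F)) as [Ee|Ee].
    { subst. split; intros; apply B0. }
    destruct (hmul_inv w hw) as [w' [hw' Hw]].
    set (d := hmul w' e). assert (hd : d <> hzero F) by (apply hmul_neq0; auto).
    specialize (H (mk e Ee)). unfold in_translate in H. simpl in H.
    rewrite (opp_mk w w' hw hw' Hw), add_mk, !rho_mk in H.
    assert (He : e = hmul w d) by (unfold d; rewrite hmul_assoc, Hw, hmul_1l; auto).
    rewrite He at 1. rewrite <- (hmul_1r w) at 1. rewrite (Bscale_iff w (hone F) d hw).
    rewrite (hmul_comm e w') in H. fold d in H.
    split; intro K; apply NNPP; intro K'; [apply H in K' | apply H in K']; auto.
  - intro E. subst. intro a. unfold in_translate. simpl.
    assert (E : gopp (gzero F) = gzero F).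
    { unfold gzero. apply opp_mk. apply hmul_1l. }
    rewrite E, gaddC, gadd0. tauto.
Qed.

#[local] Arguments og_addA {o} a b c.
#[local] Arguments og_addC {o} a b.
#[local] Arguments og_add0 {o} a.
#[local] Arguments og_addN {o} a.
#[local] Arguments og_le_refl {o} a.
#[local] Arguments og_le_trans {o} a b c.
#[local] Arguments og_le_antisym {o} a b.
#[local] Arguments og_le_total {o} a b.
#[local] Arguments og_le_add {o} a b c.

Lemma oadd0r {G : OAG} (a : G) : og_add a (og_zero G) = a.
Proof. rewrite og_addC. apply og_add0. Qed.

Lemma oaddNr {G : OAG} (a : G) : og_add a (og_opp a) = og_zero G.
Proof. rewrite og_addC. apply og_addN. Qed.

Lemma ocancel {G : OAG} (a b c : G) : og_add a c = og_add b c -> a = b.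
Proof.
  intro H. apply (f_equal (fun t => og_add t (og_opp c))) in H.
  rewrite <- !og_addA, !oaddNr, !oadd0r in H. exact H.
Qed.

Lemma oidem {G : OAG} (c : G) : og_add c c = c -> c = og_zero G.
Proof. intro H. apply (ocancel _ _ c). rewrite og_add0. exact H. Qed.

Lemma otwo {G : OAG} (c : G) : og_add c c = og_zero G -> c = og_zero G.
Proof.
  intro H. destruct (og_le_total c (og_zero G)) as [L|L].
  - apply og_le_antisym; auto. pose proof (og_le_add _ _ c L) as L2.
    rewrite H, og_add0 in L2. exact L2.
  - apply og_le_antisym; auto. pose proof (og_le_add _ _ c L) as L2.
    rewrite H, og_add0 in L2. exact L2.
Qed.

Lemma ole_addl {G : OAG} (a b c : G) : og_le a b -> og_le (og_add c a) (og_add c b).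
Proof. intro H. rewrite !(og_addC c). now apply og_le_add. Qed.

Lemma ole_self {G : OAG} (d e : G) : og_le (og_zero G) d -> og_le e (og_add e d).
Proof. intro H. pose proof (ole_addl _ _ e H) as L. rewrite oadd0r in L. exact L. Qed.

Lemma oopp_opp {G : OAG} (a : G) : og_opp (og_opp a) = a.
Proof. apply (ocancel _ _ (og_opp a)). rewrite og_addN, oaddNr. reflexivity. Qed.

Lemma oopp0 {G : OAG} : og_opp (og_zero G) = og_zero G.
Proof. rewrite <- (og_addN (og_zero G)) at 2. rewrite oadd0r. reflexivity. Qed.

Lemma ole_opp {G : OAG} (a b : G) : og_le a b -> og_le (og_opp b) (og_opp a).
Proof.
  intro H. pose proof (og_le_add _ _ (og_add (og_opp a) (og_opp b)) H) as L.
  rewrite og_addA, oaddNr, og_add0 in L.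
  rewrite (og_addC (og_opp a)), og_addA, oaddNr, og_add0 in L. exact L.
Qed.

Lemma KV_one {F : hyperfield} {G : OAG} (v : F -> option G) rho :
  krasner_valuation v rho -> v (hone F) = Some (og_zero G).
Proof.
  intros [[_ [H0 [Hm _]]] _]. pose proof (Hm (hone F) (hone F)) as E. rewrite hmul_1l in E.
  destruct (v (hone F)) as [c|] eqn:Ev.
  - simpl in E. injection E as E. f_equal. apply oidem. auto.
  - apply H0 in Ev. exfalso. now apply (hone_neq0 F).
Qed.

Lemma KV_neg {F : hyperfield} {G : OAG} (v : F -> option G) rho :
  krasner_valuation v rho -> forall x, v (hneg x) = v x.
Proof.
  intros K x. pose proof (KV_one v rho K) as E1. destruct K as [[_ [H0 [Hm _]]] _].
  assert (Em : v (hneg (hone F)) = Some (og_zero G)).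
  { pose proof (Hm (hneg (hone F)) (hneg (hone F))) as E.
    rewrite <- hneg_mul, hnn, E1 in E.
    destruct (v (hneg (hone F))) as [c|]; simpl in E; try discriminate.
    injection E as E. f_equal. apply otwo. symmetry. exact E. }
  rewrite hneg_mul, Hm, Em. destruct (v x); simpl; auto. rewrite og_add0. reflexivity.
Qed.

Lemma KV_ball {F : hyperfield} {G : OAG} (v : F -> option G) rho :
  krasner_valuation v rho -> forall x s, B x s <-> above rho (v x) (v s).
Proof.
  intros K x s. pose proof (KV_neg v rho K) as Hn.
  destruct K as [_ [_ [_ [_ K2]]]]. pose proof (K2 x (hneg x) (hzero F) s (hneg_spec x)) as E.
  unfold B, hdiff. rewrite E. clear E. split.
  - intro H. specialize (H (hneg s)). rewrite !Hn in H. apply H.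
    + unfold hdiff, hsum. apply hadd_comm. apply add0_r.
    + left. split; auto. apply ext_le_refl.
  - intros H s' Hs' m Hm. unfold hdiff, hsum in Hs'. apply add0l_eq in Hs'. subst s'.
    rewrite !Hn. rewrite !Hn in Hm. destruct Hm as [[_ E]|[_ E]]; subst; auto.
Qed.

Lemma KV_order {F : hyperfield} {G : OAG} (v : F -> option G) rho :
  krasner_valuation v rho -> ig_trivial rho ->
  forall x y a b, v x = Some a -> v y = Some b -> (og_le a b <-> sub (B y) (B x)).
Proof.
  intros K Hig x y a b Ea Eb. pose proof (KV_ball v rho K) as Hb.
  destruct K as [[Hs [H0 _]] [_ [Hin [_ _]]]]. split.
  - intros L s Hy. destruct (v s) as [c|] eqn:Ec.
    + apply Hb. apply Hb in Hy. rewrite Ea, Ec. rewrite Eb, Ec in Hy. simpl in *. unfold in_translate in *.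
      intro R. apply Hy. apply (Hin _ _ R). apply ole_addl. apply ole_opp. exact L.
    + apply H0 in Ec. subst. apply B0.
  - intro Hsub. apply NNPP. intro NL. destruct (og_le_total a b) as [L|L]; [contradiction|].
    set (d := og_add a (og_opp b)).
    assert (Hd : og_le (og_zero G) d).
    { pose proof (og_le_add _ _ (og_opp b) L) as L2. rewrite oaddNr in L2. exact L2. }
    assert (Hi : ig rho (og_opp d)).
    { intro e. unfold in_translate. rewrite oopp_opp. split.
      - intro R. apply (Hin _ _ R). apply ole_self. exact Hd.
      - intro R. apply NNPP. intro NR. destruct (Hs (Some (og_add e a))) as [s Es].
        assert (Hys : B y s).
        { apply Hb. rewrite Eb, Es. simpl. unfold in_translate.
          rewrite <- og_addA. exact NR. }
        apply Hsub in Hys. apply Hb in Hys. rewrite Ea, Es in Hys. simpl in Hys.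
        unfold in_translate in Hys. rewrite <- og_addA, oaddNr, oadd0r in Hys. auto. }
    apply Hig in Hi.
    apply NL. assert (E : a = b).
    { apply (ocancel _ _ (og_opp b)). rewrite oaddNr. fold d. rewrite <- (oopp_opp d), Hi, oopp0. reflexivity. }
    subst. apply og_le_refl.
Qed.

Definition pick {F : hyperfield} {G : OAG} (v : F -> option G) (Hs : forall g, exists x, v x = g) (a : G) : F :=
  proj1_sig (constructive_indefinite_description _ (Hs (Some a))).
Lemma pick_spec {F : hyperfield} {G : OAG} (v : F -> option G) Hs a : v (pick v Hs a) = Some a.
Proof. unfold pick. destruct constructive_indefinite_description as [x Hx]. exact Hx. Qed.

Lemma KV_nz {F : hyperfield} {G : OAG} (v : F -> option G) rho :
  krasner_valuation v rho -> forall x, x <> hzero F -> exists a, v x = Some a.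
Proof.
  intros [[_ [H0 _]] _] x hx. destruct (v x) as [a|] eqn:E; eauto. apply H0 in E. contradiction.
Qed.

Lemma uniq {F : hyperfield} (G1 : OAG) (v1 : F -> option G1) (rho1 : G1 -> Prop)
          (G2 : OAG) (v2 : F -> option G2) (rho2 : G2 -> Prop) :
      krasner_valuation v1 rho1 -> ig_trivial rho1 ->
      krasner_valuation v2 rho2 -> ig_trivial rho2 ->
      equivalent_valuations v1 v2.
Proof.
  intros K1 I1 K2 I2.
  assert (Hs : forall g, exists x, v1 x = g) by apply K1.
  assert (N1 : forall x, v1 x = None <-> x = hzero F) by apply K1.
  assert (N2 : forall x, v2 x = None <-> x = hzero F) by apply K2.
  assert (M1 : forall x y, v1 (hmul x y) = ext_add (v1 x) (v1 y)) by apply K1.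
  assert (M2 : forall x y, v2 (hmul x y) = ext_add (v2 x) (v2 y)) by apply K2.
  set (sigma := fun a => match v2 (pick v1 Hs a) with Some b => b | None => og_zero G2 end).
  assert (SS : forall x a, v1 x = Some a -> v2 x = Some (sigma a)).
  { intros x a Ex. pose proof (pick_spec v1 Hs a) as Ep. unfold sigma.
    set (p := pick v1 Hs a) in *.
    assert (hp : p <> hzero F) by (intro E; apply N1 in E; congruence).
    assert (hx : x <> hzero F) by (intro E; apply N1 in E; congruence).
    destruct (KV_nz v2 rho2 K2 p hp) as [b Eb]. destruct (KV_nz v2 rho2 K2 x hx) as [b' Eb'].
    rewrite Eb, Eb'. f_equal.
    pose proof (KV_order v1 rho1 K1 I1 p x a a Ep Ex) as O1.
    pose proof (KV_order v1 rho1 K1 I1 x p a a Ex Ep) as O1'.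
    pose proof (KV_order v2 rho2 K2 I2 p x b b' Eb Eb') as O2.
    pose proof (KV_order v2 rho2 K2 I2 x p b' b Eb' Eb) as O2'.
    apply og_le_antisym; [apply O2' | apply O2]; [apply O1' | apply O1]; apply og_le_refl. }
  exists sigma. split; [|split; [|split]].
  - intros a b. pose proof (pick_spec v1 Hs a) as Ea. pose proof (pick_spec v1 Hs b) as Eb.
    set (x := pick v1 Hs a) in *. set (y := pick v1 Hs b) in *.
    assert (E : v1 (hmul x y) = Some (og_add a b)) by (rewrite M1, Ea, Eb; reflexivity).
    apply SS in E. rewrite M2, (SS x a Ea), (SS y b Eb) in E. simpl in E. injection E as E. auto.
  - intros a b. pose proof (pick_spec v1 Hs a) as Ea. pose proof (pick_spec v1 Hs b) as Eb.
    set (x := pick v1 Hs a) in *. set (y := pick v1 Hs b) in *.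
    rewrite (KV_order v1 rho1 K1 I1 x y a b Ea Eb).
    rewrite (KV_order v2 rho2 K2 I2 x y (sigma a) (sigma b) (SS x a Ea) (SS y b Eb)). tauto.
  - intro b. assert (Hs2 : forall g, exists x, v2 x = g) by apply K2.
    destruct (Hs2 (Some b)) as [y Ey].
    assert (hy : y <> hzero F) by (intro E; apply N2 in E; congruence).
    destruct (KV_nz v1 rho1 K1 y hy) as [a Ea]. exists a.
    apply SS in Ea. congruence.
  - intro x. destruct (v1 x) as [a|] eqn:E.
    + simpl. now apply SS.
    + simpl. apply N2. now apply N1.
Qed.

Theorem corollary6p6 (F : hyperfield) :
  superiorly_canonical F ->
  (exists (G : OAG) (v : F -> option G) (rho : G -> Prop),
      krasner_valuation v rho /\ ig_trivial rho) /\
  (forall (G1 : OAG) (v1 : F -> option G1) (rho1 : G1 -> Prop)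
          (G2 : OAG) (v2 : F -> option G2) (rho2 : G2 -> Prop),
      krasner_valuation v1 rho1 -> ig_trivial rho1 ->
      krasner_valuation v2 rho2 -> ig_trivial rho2 ->
      equivalent_valuations v1 v2).
Proof.
  intro S. split.
  - exists (GamOAG F S), (cv S), (crho S). split; [apply cv_krasner | apply cv_ig].
  - apply uniq.
Qed.
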